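(* Let $n\ge 1$ and let $\|\cdot\|$ be a norm on $\mathbb{R}^n$ that is $C^\infty$ on $\mathbb{R}^n\setminus\{0\}$. Let $G^n$ be the group (under composition) of all $C^\infty$ diffeomorphisms $\mathbf{Y}:\mathbb{R}^n\setminus\{0\}\to\mathbb{R}^n\setminus\{0\}$ with $\mathbf{Y}(\lambda\mathbf{x})=\lambda\mathbf{Y}(\mathbf{x})$ for all $\mathbf{x}\ne0$, $\lambda\in\mathbb{R}\setminus\{0\}$, with product $\mathbf{Y}_{g_1g_2}=\mathbf{Y}_{g_1}\circ\mathbf{Y}_{g_2}$. Let $N^n\subset G^n$ consist of the elements with $\mathbf{Y}_g(\mathbf{x})=\mathbf{x}\,r_g(\mathbf{x})$ for a $C^\infty$ function $r_g:\mathbb{R}^n\setminus\{0\}\to(0,\infty)$ satisfying $r_g(\lambda\mathbf{x})=r_g(\mathbf{x})$ for all $\lambda\in\mathbb{R}\setminus\{0\}$. Let $H^n\subset G^n$ be the subgroup of elements $h$ with $\|\mathbf{Y}_h(\mathbf{x})\|=\|\mathbf{x}\|$ and $\mathbf{Y}_h(-\mathbf{x})=-\mathbf{Y}_h(\mathbf{x})$ for all $\mathbf{x}\ne 0$. Then every $g\in G^n$ has a unique representation $g=h\,g_N$ with $h\in H^n$ and $g_N\in N^n$, i.e. $\mathbf{Y}_g=\mathbf{Y}_h\circ\mathbf{Y}_{g_N}$.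
   Context: $G^n$ is the group of Thermodynamic Coordinate Transformations (homogeneous degree-one diffeomorphisms of $\mathbb{R}^n\setminus\{0\}$); elements are identified with their maps and the group law is composition. *)

(* Defs.v *)
From HB Require Import structures.
From mathcomp Require Import all_boot all_order all_algebra.
From mathcomp Require Import all_classical all_reals all_analysis.
Set Implicit Arguments. Unset Strict Implicit. Unset Printing Implicit Defensive.
Import Order.TTheory GRing.Theory Num.Theory.
Import numFieldNormedType.Exports.
Local Open Scope ring_scope.

Fixpoint iterD (R : realType) (V W : normedModType R) (vs : seq V) (f : V -> W)
  : V -> W :=
  match vs with
  | [::] => f
  | v :: vs' => fun x => 'D_v (iterD vs' f) x
  end.

Definition smooth_on (R : realType) (V W : normedModType R) (U : set V)
  (f : V -> W) : Prop :=
  forall (vs : seq V) (x : V), U x -> differentiable (iterD vs f) x.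

Definition punct (R : realType) (n : nat) : set 'rV[R]_n :=
  [set x | x != 0].

Definition is_norm (R : realType) (n : nat) (N : 'rV[R]_n -> R) : Prop :=
  (forall x, N x = 0 -> x = 0) /\
  (forall (a : R) x, N (a *: x) = `|a| * N x) /\
  (forall x y, N (x + y) <= N x + N y).

(* elements of G^n : homogeneous degree-one C^infinity diffeomorphisms of
   R^n \ {0} (values at 0 are irrelevant) *)
Definition inG (R : realType) (n : nat) (Y : 'rV[R]_n -> 'rV[R]_n) : Prop :=
  (forall x, x != 0 -> Y x != 0) /\
  smooth_on (@punct R n) Y /\
  (exists Yi : 'rV[R]_n -> 'rV[R]_n,
     (forall x, x != 0 -> Yi x != 0) /\
     smooth_on (@punct R n) Yi /\
     (forall x, x != 0 -> Yi (Y x) = x) /\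
     (forall x, x != 0 -> Y (Yi x) = x)) /\
  (forall (l : R) x, x != 0 -> l != 0 -> Y (l *: x) = l *: Y x).

Definition inN (R : realType) (n : nat) (Y : 'rV[R]_n -> 'rV[R]_n) : Prop :=
  inG Y /\
  exists r : 'rV[R]_n -> R,
    smooth_on (@punct R n) r /\
    (forall x, x != 0 -> 0 < r x) /\
    (forall (l : R) x, x != 0 -> l != 0 -> r (l *: x) = r x) /\
    (forall x, x != 0 -> Y x = r x *: x).

Definition inH (R : realType) (n : nat) (N : 'rV[R]_n -> R)
  (Y : 'rV[R]_n -> 'rV[R]_n) : Prop :=
  inG Y /\
  (forall x, x != 0 -> N (Y x) = N x) /\
  (forall x, x != 0 -> Y (- x) = - Y x).

(* Main.v *)
Require Import Defs.
From HB Require Import structures.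
From mathcomp Require Import all_boot all_order all_algebra.
From mathcomp Require Import all_classical all_reals all_analysis.
From mathcomp Require Import ring lra.
Import Order.TTheory GRing.Theory Num.Theory.
Import numFieldNormedType.Exports.
Local Open Scope ring_scope.

Module Helpers.
Local Open Scope classical_set_scope.

Section Gen.
Context {R : realType} {V W : normedModType R}.

Lemma near_eq_differentiable (f g : V -> W) (x : V) :
  (\forall y \near x, f y = g y) -> differentiable f x -> differentiable g x.
Proof.
move=> fg df.
have fgx : f x = g x := nbhs_singleton fg.
have fg0 : \forall h \near (0:V), f (h + x) = g (h + x).
  by rewrite nbhs0P in fg; near=> h; rewrite addrC; near: h.
have key : g \o shift x = cst (g x) + 'd f x +o_ (0:V) id.
  apply/eqaddoP => e e0.
  have /eqaddoP := diff_locally df => /(_ e e0) H.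
  move: H fg0; apply: filterS2 => h Hh Eh.
  move: Hh; rewrite !fctE /= -Eh.
  by move: fgx; rewrite /cst => ->.
have Hd : 'd g x = 'd f x :> (V -> W).
  apply: diff_unique => //; exact: diff_continuous.
apply/diff_locallyP; rewrite Hd; split => //; exact: diff_continuous.
Unshelve. all: by end_near. Qed.

Lemma iterD_rcons (vs : seq V) (v : V) (f : V -> W) :
  Defs.iterD (rcons vs v) f = Defs.iterD vs ('D_v f).
Proof. by elim: vs => [//|w vs IH] /=; rewrite IH. Qed.

Definition Ck (k : nat) (U : set V) (f : V -> W) :=
  forall (vs : seq V) x, (size vs <= k)%N -> U x -> differentiable (Defs.iterD vs f) x.

Definition smooth U f := forall k, Ck k U f.

Lemma smoothE U f : smooth U f <-> smooth_on U f.
Proof.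
split=> [H vs x Ux|H k vs x _ Ux]; last exact: H.
exact: (H (size vs)).
Qed.

Lemma CkW k U f : Ck k.+1 U f -> Ck k U f.
Proof. by move=> H vs x sk; apply: H; apply: leqW. Qed.

Lemma Ck0 U f : Ck 0 U f <-> (forall x, U x -> differentiable f x).
Proof.
split=> [H x Ux|H [|//] x _ Ux]; [exact: (H [::])|exact: H].
Qed.

Lemma CkS k U f : Ck k.+1 U f <->
  ((forall x, U x -> differentiable f x) /\ forall v, Ck k U ('D_v f)).
Proof.
split=> [H|[H1 H2] vs x]; first split.
- by move=> x Ux; apply: (H [::]).
- by move=> v vs x sk Ux; rewrite -iterD_rcons; apply: H => //; rewrite size_rcons.
- case/lastP: vs => [_ Ux|vs v]; first exact: H1.
  rewrite size_rcons ltnS iterD_rcons => sk Ux; exact: H2.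
Qed.

Lemma smoothD1 U f : smooth U f -> forall v, smooth U ('D_v f).
Proof. by move=> H v k; have /CkS[_] := H k.+1; apply. Qed.

Lemma smooth_diff U f : smooth U f -> forall x, U x -> differentiable f x.
Proof. by move=> H; apply/Ck0. Qed.

Variable U : set V.
Hypothesis oU : open U.

Lemma iterD_loc (f g : V -> W) : (forall y, U y -> f y = g y) ->
  forall vs x, U x -> Defs.iterD vs f x = Defs.iterD vs g x.
Proof.
move=> fg vs; elim: vs => [|v vs IH] x Ux /=; first exact: fg.
apply: near_eq_derive.
have : nbhs x U by apply: open_nbhs_nbhs; split.
by apply: filterS => y; apply: IH.
Qed.

Lemma Ck_loc k (f g : V -> W) : (forall y, U y -> f y = g y) ->
  Ck k U f -> Ck k U g.
Proof.
move=> fg H vs x sk Ux; apply: (@near_eq_differentiable (Defs.iterD vs f)); last exact: H.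
have : nbhs x U by apply: open_nbhs_nbhs; split.
by apply: filterS => y; apply: iterD_loc.
Qed.

Lemma Ck_cst k (c : W) : Ck k U (cst c).
Proof.
elim: k c => [|k IH] c; first by apply/Ck0 => x _; apply: differentiable_cst.
apply/CkS; split=> [x _|v]; first exact: differentiable_cst.
have -> : 'D_v (cst c) = cst (0 : W).
  by apply/funext => x; rewrite derive_cst.
exact: IH.
Qed.

Lemma Ck_add k (f g : V -> W) : Ck k U f -> Ck k U g -> Ck k U (fun x => f x + g x).
Proof.
elim: k f g => [|k IH] f g.
  by move=> /Ck0 Hf /Ck0 Hg; apply/Ck0 => x Ux; apply: differentiableD; auto.
move=> /CkS[df Hf] /CkS[dg Hg]; apply/CkS; split.
  by move=> x Ux; apply: differentiableD; auto.
move=> v; apply: (@Ck_loc _ (fun x => 'D_v f x + 'D_v g x)); last exact: IH.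
move=> y Uy; rewrite (@deriveD _ _ _ f g) //; apply: diff_derivable; [exact: df|exact: dg].
Qed.

Lemma Ck_sum k m (F : 'I_m -> V -> W) :
  (forall i, Ck k U (F i)) -> Ck k U (fun x => \sum_(i < m) F i x).
Proof.
elim: m F => [|m IH] F HF.
  have -> : (fun x => \sum_(i < 0) F i x) = cst 0.
    by apply/funext => x; rewrite big_ord0.
  exact: Ck_cst.
have -> : (fun x => \sum_(i < m.+1) F i x) =
   (fun x => (fun x => \sum_(i < m) F (widen_ord (leqnSn m) i) x) x + F ord_max x).
  by apply/funext => x; rewrite big_ord_recr.
apply: Ck_add => //; exact: IH.
Qed.

End Gen.
Arguments smooth_diff {R V W U f}.
Arguments smoothD1 {R V W U f}.

Section Gen2.
Context {R : realType} {V : normedModType R}.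
Variable U : set V.
Hypothesis oU : open U.
Lemma Ck_id k : Ck k U (fun x : V => x).
Proof.
case: k => [|k]; first by apply/Ck0 => x _; by have : differentiable (@id V) x by [].
apply/CkS; split=> [x _|v]; first by have : differentiable (@id V) x by [].
have -> : 'D_v (fun x : V => x) = cst v.
  by apply/funext => x; rewrite derive_id.
exact: Ck_cst.
Qed.

Lemma Ck_scalel (W : normedModType R) k (a : V -> R) (c : W) : Ck k U a -> Ck k U (fun x => a x *: c).
Proof.
elim: k a => [|k IH] a.
  by move=> /Ck0 Ha; apply/Ck0 => x Ux; apply: differentiableZl; auto.
move=> /CkS[da Ha]; apply/CkS; split.
  by move=> x Ux; apply: differentiableZl; auto.
move=> v; apply: (@Ck_loc _ _ _ _ oU _ (fun x => 'D_v a x *: c)); last exact: IH.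
move=> y Uy; rewrite [RHS]deriveE; last by apply: differentiableZl; auto.
by rewrite diffZl; [rewrite deriveE //|]; auto.
Qed.

End Gen2.

Section Scal.
Context {R : realType} {V : normedModType R}.
Variable U : set V.
Hypothesis oU : open U.

Lemma Ck_mul k (a b : V -> R) : Ck k U a -> Ck k U b -> Ck k U (fun x => a x * b x).
Proof.
elim: k a b => [|k IH] a b.
  by move=> /Ck0 Ha /Ck0 Hb; apply/Ck0 => x Ux; apply: differentiableM; auto.
move=> Ha Hb; have [da Ha'] := (CkS k U a).1 Ha; have [db Hb'] := (CkS k U b).1 Hb.
apply/CkS; split.
  by move=> x Ux; apply: differentiableM; auto.
move=> v.
apply: (@Ck_loc _ _ _ _ oU _ (fun x => a x * 'D_v b x + b x * 'D_v a x)); last first.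
  apply: (@Ck_add _ _ _ U oU); apply: IH => //; exact: CkW.
move=> y Uy; rewrite (@deriveM _ _ a b) //; apply: diff_derivable; auto.
Qed.

Lemma Ck_inv k (a : V -> R) : smooth U a -> (forall x, U x -> a x != 0) ->
  Ck k U (fun x => (a x)^-1).
Proof.
move=> Ha a0; elim: k => [|k IH].
  by apply/Ck0 => x Ux; apply: differentiableV; auto; exact: smooth_diff Ha x Ux.
apply/CkS; split.
  by move=> x Ux; apply: differentiableV; auto; exact: smooth_diff Ha x Ux.
move=> v.
apply: (@Ck_loc _ _ _ _ oU _
  (fun x => (fun x => -1 * ((fun x => (a x)^-1 * (a x)^-1) x)) x * 'D_v a x)).
  move=> y Uy; rewrite (@deriveV _ _ a) ?a0 //; last first.
    by apply: diff_derivable; exact: smooth_diff Ha y Uy.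
  by rewrite mulN1r -expr2 exprVn.
apply: Ck_mul; last exact: smoothD1 Ha v k.
apply: Ck_mul; first exact: Ck_cst.
by apply: Ck_mul; exact: IH.
Qed.

End Scal.

Section Mx.
Context {R : realType} {V : normedModType R}.
Variable U : set V.
Hypothesis oU : open U.

Lemma derive_coord m (F : V -> 'rV[R]_m) x v i :
  derivable F x v -> 'D_v (fun y => F y 0 i) x = ('D_v F x) 0 i.
Proof. by move=> dF; rewrite derive_mx // mxE. Qed.

Lemma Ck_coord k m (F : V -> 'rV[R]_m) : Ck k U F -> forall i, Ck k U (fun x => F x 0 i).
Proof.
elim: k F => [|k IH] F.
  move=> /Ck0 HF i; apply/Ck0 => x Ux.
  have -> : (fun x => F x 0 i) = (fun M : 'rV[R]_m => M 0 i) \o F by [].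
  by apply: differentiable_comp; [exact: HF|exact: differentiable_coord].
move=> /CkS[dF HF] i; apply/CkS; split.
  move=> x Ux.
  have -> : (fun x => F x 0 i) = (fun M : 'rV[R]_m => M 0 i) \o F by [].
  by apply: differentiable_comp; [exact: dF|exact: differentiable_coord].
move=> v; apply: (@Ck_loc _ _ _ U oU _ (fun x => 'D_v F x 0 i)); last exact: IH.
move=> y Uy; rewrite derive_coord //; apply: diff_derivable; exact: dF.
Qed.

Lemma Ck_of_coord k m (F : V -> 'rV[R]_m) :
  (forall i, Ck k U (fun x => F x 0 i)) -> Ck k U F.
Proof.
move=> H.
have -> : F = (fun x => \sum_(j < m) (fun j x => F x 0 j *: (delta_mx 0 j : 'rV[R]_m)) j x).
  by apply/funext => x; rewrite [LHS]row_sum_delta.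
apply: (@Ck_sum _ _ _ U oU) => j.
exact: Ck_scalel.
Qed.

Lemma smooth_coord m (F : V -> 'rV[R]_m) : smooth U F -> forall i, smooth U (fun x => F x 0 i).
Proof. by move=> H i k; apply: Ck_coord. Qed.

Lemma smooth_of_coord m (F : V -> 'rV[R]_m) :
  (forall i, smooth U (fun x => F x 0 i)) -> smooth U F.
Proof. by move=> H k; apply: Ck_of_coord => i; apply: H. Qed.

Lemma Ck_compose m (U' : set 'rV[R]_m) (Y : V -> 'rV[R]_m) :
  smooth U Y -> (forall x, U x -> U' (Y x)) ->
  forall k (f : 'rV[R]_m -> R), smooth U' f -> Ck k U (fun x => f (Y x)).
Proof.
move=> HY YU k; elim: k => [|k IH] f Hf.
  apply/Ck0 => x Ux.
  have -> : (fun x => f (Y x)) = f \o Y by [].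
  apply: differentiable_comp; first exact: smooth_diff HY x Ux.
  exact: smooth_diff Hf _ (YU x Ux).
apply/CkS; split.
  move=> x Ux.
  have -> : (fun x => f (Y x)) = f \o Y by [].
  apply: differentiable_comp; first exact: smooth_diff HY x Ux.
  exact: smooth_diff Hf _ (YU x Ux).
move=> v.
apply: (@Ck_loc _ _ _ U oU _ (fun x => \sum_(i < m)
   (fun i x => 'D_v (fun y => Y y 0 i) x * 'D_(delta_mx 0 i : 'rV[R]_m) f (Y x)) i x)).
  move=> y Uy.
  have dY := smooth_diff HY y Uy.
  have df := smooth_diff Hf _ (YU y Uy).
  have -> : (fun x => f (Y x)) = f \o Y by [].
  rewrite deriveE; last exact: differentiable_comp.
  rewrite diff_comp // /= -(deriveE _ dY) [X in 'd f (Y y) X]row_sum_delta linear_sum /=.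
  apply: eq_bigr => i _; rewrite linearZ /= -(deriveE _ df) derive_coord //.
  exact: diff_derivable.
apply: (@Ck_sum _ _ _ U oU) => i.
apply: Ck_mul => //.
  exact: smoothD1 (@smooth_coord m Y HY i) v k.
exact: (IH ('D_(delta_mx 0 i : 'rV[R]_m) f) (smoothD1 Hf _)).
Qed.

End Mx.

Lemma smooth_scal {R : realType} {V : normedModType R} (U : set V) (oU : open U) m
  (a : V -> R) (F : V -> 'rV[R]_m) : smooth U a -> smooth U F ->
  smooth U (fun x => a x *: F x).
Proof.
move=> Ha HF; apply: (@smooth_of_coord _ _ U oU) => i.
have -> : (fun x => (a x *: F x) 0 i) = (fun x => a x * F x 0 i).
  by apply/funext => x; rewrite mxE.
move=> k; apply: (@Ck_mul _ _ U oU); first exact: Ha.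
exact: (@smooth_coord _ _ U oU _ F HF).
Qed.

Lemma smooth_id' {R : realType} {V : normedModType R} (U : set V) :
  smooth U (fun x : V => x).
Proof. by move=> k; apply: Ck_id. Qed.

Lemma open_punct (R : realType) n : open (@punct R n).
Proof.
have -> : @punct R n = ~` [set 0].
  by apply/seteqP; split => x /=; move/eqP.
rewrite openC; apply: accessible_closed_set1; apply: hausdorff_accessible.
exact: norm_hausdorff.
Qed.

End Helpers.
Import Helpers.

Theorem proposition2 (R : realType) (n : nat) (N : 'rV[R]_n -> R) :
  (1 <= n)%N ->
  is_norm N ->
  smooth_on (@punct R n) N ->
  forall Y : 'rV[R]_n -> 'rV[R]_n, inG Y ->
    (exists h g : 'rV[R]_n -> 'rV[R]_n,
       inH N h /\ inN g /\ (forall x, x != 0 -> Y x = h (g x))) /\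
    (forall h1 g1 h2 g2 : 'rV[R]_n -> 'rV[R]_n,
       inH N h1 -> inN g1 -> inH N h2 -> inN g2 ->
       (forall x, x != 0 -> Y x = h1 (g1 x)) ->
       (forall x, x != 0 -> Y x = h2 (g2 x)) ->
       (forall x, x != 0 -> h1 x = h2 x) /\ (forall x, x != 0 -> g1 x = g2 x)).
Proof.
move=> _ [NZ [NS NT]] HN Y [Ynz [YS [[Yi [Yinz [YiS [YiY YYi]]]] Yh]]].
have oP := open_punct R n.
have N0 : N 0 = 0 by rewrite -(scale0r (0 : 'rV[R]_n)) NS normr0 mul0r.
have Nge0 x : 0 <= N x.
  have := NT x (- x); rewrite subrr N0 -scaleN1r NS normrN normr1 mul1r.
  lra.
have Npos x : x != 0 -> 0 < N x.
  move=> xn0; rewrite lt0r Nge0 andbT; apply/eqP => /NZ; exact/eqP.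
have Nne x : x != 0 -> N x != 0 by move/Npos; rewrite lt0r => /andP[].
pose rr x := N (Y x) * (N x)^-1.
have rr_pos x : x != 0 -> 0 < rr x.
  by move=> xn0; rewrite /rr divr_gt0 // Npos // Ynz.
have rr_ne0 x : x != 0 -> rr x != 0 by move/rr_pos; rewrite lt0r => /andP[].
have rr_scale l x : x != 0 -> l != 0 -> rr (l *: x) = rr x.
  move=> xn0 ln0; rewrite /rr Yh // !NS.
  have : `|l| != 0 by rewrite normr_eq0.
  have := Nne x xn0.
  move=> h1 h2; field.
  by rewrite h1 h2.
have sN : smooth (@punct R n) N by apply/smoothE.
have sY : smooth (@punct R n) Y by apply/smoothE.
have sYi : smooth (@punct R n) Yi by apply/smoothE.
have sNY : smooth (@punct R n) (fun x => N (Y x)).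
  by move=> k; apply: (@Ck_compose _ _ _ oP _ (@punct R n)) => //.
have sNinv : smooth (@punct R n) (fun x => (N x)^-1).
  by move=> k; apply: (@Ck_inv _ _ _ oP) => //.
have srr : smooth (@punct R n) rr.
  by move=> k; apply: (@Ck_mul _ _ _ oP); [exact: sNY|exact: sNinv].
have srinv : smooth (@punct R n) (fun x => (rr x)^-1).
  by move=> k; apply: (@Ck_inv _ _ _ oP) => //.
have srrYi : smooth (@punct R n) (fun x => rr (Yi x)).
  by move=> k; apply: (@Ck_compose _ _ _ oP _ (@punct R n)) => //.
pose g x := rr x *: x.
pose gi x := (rr x)^-1 *: x.
pose h x := (rr x)^-1 *: Y x.
pose hi x := rr (Yi x) *: Yi x.
have sg : smooth (@punct R n) g by apply: smooth_scal => //; exact: smooth_id'.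
have sgi : smooth (@punct R n) gi by apply: smooth_scal => //; exact: smooth_id'.
have sh : smooth (@punct R n) h by apply: smooth_scal.
have shi : smooth (@punct R n) hi by apply: smooth_scal.
have rinv_ne0 x : x != 0 -> (rr x)^-1 != 0 by move=> ?; rewrite invr_eq0 rr_ne0.
have gnz x : x != 0 -> g x != 0 by move=> xn0; rewrite scaler_eq0 negb_or rr_ne0.
have ginz x : x != 0 -> gi x != 0 by move=> xn0; rewrite scaler_eq0 negb_or rinv_ne0.
have hnz x : x != 0 -> h x != 0 by move=> xn0; rewrite scaler_eq0 negb_or rinv_ne0 // Ynz.
have hinz x : x != 0 -> hi x != 0.
  by move=> xn0; rewrite scaler_eq0 negb_or rr_ne0 ?Yinz.
have inGg : inG g.
  split; first exact: gnz.
  split; first exact/smoothE.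
  split.
    exists gi; split; first exact: ginz.
    split; first exact/smoothE.
    split=> x xn0.
      by rewrite /gi /g rr_scale ?rr_ne0 // scalerA mulVf ?rr_ne0 // scale1r.
    by rewrite /gi /g rr_scale ?rinv_ne0 // scalerA divff ?rr_ne0 // scale1r.
  by move=> l x xn0 ln0; rewrite /g rr_scale // !scalerA mulrC.
have inHh : inH N h.
  split.
    split; first exact: hnz.
    split; first exact/smoothE.
    split.
      exists hi; split; first exact: hinz.
      split; first exact/smoothE.
      split=> x xn0.
        rewrite /hi /h -Yh ?rinv_ne0 // YiY; last by rewrite scaler_eq0 negb_or rinv_ne0.
        by rewrite rr_scale ?rinv_ne0 // scalerA divff ?rr_ne0 // scale1r.
      rewrite /hi /h rr_scale ?rr_ne0 ?Yinz // Yh ?rr_ne0 ?Yinz //.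
      by rewrite scalerA mulVf ?rr_ne0 ?Yinz // scale1r YYi.
    by move=> l x xn0 ln0; rewrite /h rr_scale // Yh // !scalerA mulrC.
  split=> x xn0.
    rewrite /h NS ger0_norm; last by rewrite invr_ge0 ltW // rr_pos.
    rewrite /rr; have := Nne x xn0; have := Nne _ (Ynz x xn0) => h1 h2.
    by field; rewrite h1 h2.
  have mx : - x = (-1) *: x by rewrite scaleN1r.
  rewrite /h mx rr_scale ?oppr_eq0 ?oner_eq0 // Yh ?oppr_eq0 ?oner_eq0 //.
  by rewrite scaleN1r scalerN.
split.
  exists h, g; split; first exact: inHh.
  split.
    split; first exact: inGg.
    exists rr; split; first exact/smoothE.
    by split; [exact: rr_pos|split; [exact: rr_scale|]].
  move=> x xn0; rewrite /h /g rr_scale ?rr_ne0 // Yh ?rr_ne0 //.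
  by rewrite scalerA mulVf ?rr_ne0 // scale1r.
move=> h1 g1 h2 g2 [_ [N1h _]] G1g [_ [N2h _]] G2g E1 E2.
have [[g1nz _] [r1 [_ [r1p [_ g1r]]]]] := G1g.
have [[g2nz _] [r2 [_ [r2p [_ g2r]]]]] := G2g.
have geq x : x != 0 -> g1 x = g2 x.
  move=> xn0.
  have e1 : N (Y x) = r1 x * N x.
    by rewrite E1 // N1h ?g1nz // g1r // NS ger0_norm // ltW // r1p.
  have e2 : N (Y x) = r2 x * N x.
    by rewrite E2 // N2h ?g2nz // g2r // NS ger0_norm // ltW // r2p.
  have req : r1 x = r2 x.
    by apply: (mulIf (Nne x xn0)); rewrite -e1 -e2.
  by rewrite g1r // g2r // req.
split=> // x xn0.
move: G1g => [[_ [_ [[Gi [Ginz [_ [GiG GGi]]]] _]]] _].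
have e := GGi x xn0.
by rewrite -{1}e -E1 ?Ginz // E2 ?Ginz // -geq ?Ginz // e.
Qed.
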